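(* For all integers $1\le m\le n$, \[ S(n,m) = 1 + \sum_{x=m}^{\lfloor n/2\rfloor}\bigl(S(n-x,x)+1\bigr), \] where the sum is empty (and $S(n,m)=1$) when $m>\lfloor n/2\rfloor$.
   Context: An ascending composition of a positive integer $n$ is a finite sequence of positive integers $(a_1,\dots,a_k)$, $k\ge1$, with $a_1+\dots+a_k=n$ and $a_1\le\dots\le a_k$. For $1\le m\le n$, $\mathcal{A}(n,m)$ is the set of ascending compositions of $n$ with $a_1\ge m$. List the elements of $\mathcal{A}(n,m)$ in increasing lexicographic order as $b^{(1)},\dots,b^{(N)}$. The suffix length $S(n,m)$ is defined as the number of parts of $b^{(1)}$ plus, for each $i=1,\dots,N-1$, the number of parts of $b^{(i+1)}$ lying beyond the longest common prefix of $b^{(i)}$ and $b^{(i+1)}$. *)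

(* Defs.v *)
From mathcomp Require Import all_boot.
Set Implicit Arguments. Unset Strict Implicit. Unset Printing Implicit Defensive.

Definition is_asc_comp (n m : nat) (s : seq nat) : bool :=
  [&& s != [::], all (fun a => 0 < a) s, sorted leq s, sumn s == n
    & m <= head 0 s].

(* All sequences of length <= k with entries in {1,...,n}: a finite
   superset of the ascending compositions of n (take k = n). *)
Fixpoint all_seqs (k n : nat) : seq (seq nat) :=
  match k with
  | 0 => [:: [::]]
  | k'.+1 => [::] :: [seq x :: s | x <- iota 1 n, s <- all_seqs k' n]
  end.

Fixpoint lexle (s t : seq nat) : bool :=
  match s, t with
  | [::], _ => true
  | _ :: _, [::] => false
  | x :: s', y :: t' => (x < y) || ((x == y) && lexle s' t')
  end.

Definition asc_comps (n m : nat) : seq (seq nat) :=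
  sort lexle (undup (filter (is_asc_comp n m) (all_seqs n n))).

Fixpoint lcp (s t : seq nat) : nat :=
  match s, t with
  | x :: s', y :: t' => if x == y then (lcp s' t').+1 else 0
  | _, _ => 0
  end.

Definition suffix_length (n m : nat) : nat :=
  match asc_comps n m with
  | [::] => 0
  | b :: rest => size b + sumn (pairmap (fun a c => size c - lcp a c) b rest)
  end.

(* Main.v *)
Require Import Defs.
From mathcomp Require Import all_boot.
From Stdlib Require Import Lia.
Set Implicit Arguments. Unset Strict Implicit. Unset Printing Implicit Defensive.

Fixpoint lexlt (s t : seq nat) : bool :=
  match s, t with
  | [::], [::] => false
  | [::], _ :: _ => true
  | _ :: _, [::] => false
  | x :: s', y :: t' => (x < y) || ((x == y) && lexlt s' t')
  end.

Lemma lexle_trans : transitive lexle.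
Proof.
move=> t s u; elim: s t u => [|x s IH] [|y t] [|z u] //=.
case/orP=> [lxy|/andP[/eqP-> H1]]; case/orP=> [lyz|/andP[/eqP<- H2]].
- by rewrite (ltn_trans lxy lyz).
- by rewrite lxy.
- by rewrite lyz.
- by rewrite eqxx (IH _ _ H1 H2) orbT.
Qed.

Lemma lexle_anti : antisymmetric lexle.
Proof.
move=> s t; elim: s t => [|x s IH] [|y t] //=.
case/andP=> /orP[lxy|/andP[/eqP-> H1]] /orP[lyx|/andP[/eqP E H2]].
- by move: (ltn_trans lxy lyx); rewrite ltnn.
- by move: lxy; rewrite E ltnn.
- by move: lyx; rewrite ltnn.
- by rewrite (IH t); last by rewrite H1 H2.
Qed.

Lemma lexle_total : total lexle.
Proof.
move=> s t; elim: s t => [|x s IH] [|y t] //=.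
case: (ltngtP x y) => //= ->; by rewrite eqxx /= IH.
Qed.

Lemma lexlt_trans : transitive lexlt.
Proof.
move=> t s u; elim: s t u => [|x s IH] [|y t] [|z u] //=.
case/orP=> [lxy|/andP[/eqP-> H1]]; case/orP=> [lyz|/andP[/eqP<- H2]].
- by rewrite (ltn_trans lxy lyz).
- by rewrite lxy.
- by rewrite lyz.
- by rewrite eqxx (IH _ _ H1 H2) orbT.
Qed.

Lemma lexlt_irr s : lexlt s s = false.
Proof. by elim: s => //= x s ->; rewrite ltnn eqxx. Qed.

Lemma lexlt_le s t : lexlt s t -> lexle s t.
Proof.
elim: s t => [|x s IH] [|y t] //=.
by case/orP=> [->//|/andP[-> /IH ->]]; rewrite orbT.
Qed.

Lemma lexlt_uniq s : pairwise lexlt s -> uniq s.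
Proof.
elim: s => //= a s IH /andP[Ha Hs]; rewrite IH // andbT.
apply/negP=> Hin; move/allP: Ha => /(_ _ Hin); by rewrite lexlt_irr.
Qed.

Lemma lexlt_sorted s : pairwise lexlt s -> sorted lexle s.
Proof.
move=> H; apply: pairwise_sorted; elim: s H => //= a s IH /andP[Ha Hs].
rewrite IH // andbT; apply/allP=> y /(allP Ha); exact: lexlt_le.
Qed.

Definition dlt (a c : seq nat) := size c - lcp a c.
Definition T (L : seq (seq nat)) :=
  match L with [::] => 0 | b :: rest => size b + sumn (pairmap dlt b rest) end.
Definition B (G : nat -> seq (seq nat)) n xs :=
  flatten [seq map (cons x) (G x) | x <- xs] ++ [:: [:: n]].

Lemma pairmap_cons x b r : pairmap dlt (x :: b) (map (cons x) r) = pairmap dlt b r.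
Proof.
elim: r b => //= c r IH b; rewrite IH /dlt /= eqxx //.
Qed.

Lemma T_block x G R : G != [::] ->
  (R = [::] \/ exists y d r, R = (y :: d) :: r /\ y != x) ->
  T (map (cons x) G ++ R) = T G + 1 + T R.
Proof.
case: G => // c g _ HR /=.
rewrite pairmap_cat pairmap_cons sumn_cat last_map.
case: HR => [->|[y [d [r [-> Hyx]]]]] /=.
  by rewrite !addn0 addn1 addSn.
rewrite /dlt /= eq_sym (negbTE Hyx) subn0 -/dlt.
rewrite -!plusE; lia.
Qed.

Section Blocks.
Variables (G : nat -> seq (seq nat)) (n : nat).

Lemma B_cons m xs : B G n (m :: xs) = map (cons m) (G m) ++ B G n xs.
Proof. by rewrite /B /= catA. Qed.

Lemma B_shape k m : m + k <= n -> (forall x, m <= x < m + k -> G x != [::]) ->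
  exists y d r, B G n (iota m k) = (y :: d) :: r /\ m <= y.
Proof.
elim: k m => [|k IH] m Hk HG; first by exists n, [::], [::]; rewrite addn0 in Hk.
rewrite /= B_cons.
have: G m != [::] by apply: HG; rewrite leqnn addnS ltnS leq_addr.
case: (G m) => // c g _; exists m, c, (map (cons m) g ++ B G n (iota m.+1 k)); split=> //.
Qed.

Lemma B_T k m : m + k <= n -> (forall x, m <= x < m + k -> G x != [::]) ->
  T (B G n (iota m k)) = \sum_(x <- iota m k) (T (G x) + 1) + 1.
Proof.
elim: k m => [|k IH] m Hk HG; first by rewrite big_nil.
rewrite /= B_cons big_cons T_block.
- rewrite IH; first by rewrite !addnA.
  + by rewrite addSnnS.
  + move=> x /andP[h1 h2]; apply: HG; rewrite (ltnW h1) -addSnnS //.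
- by apply: HG; rewrite leqnn addnS ltnS leq_addr.
- right.
  have HG' : forall x, m.+1 <= x < m.+1 + k -> G x != [::].
    move=> x /andP[h1 h2]; apply: HG; rewrite (ltnW h1) -addSnnS //.
  have Hk' : m.+1 + k <= n by rewrite addSnnS.
  have [y [d [r [E Hy]]]] := B_shape Hk' HG'.
  exists y, d, r; split=> //; by rewrite eq_sym neq_ltn Hy.
Qed.

Lemma B_mem k m s : m + k <= n -> s \in B G n (iota m k) ->
  exists y d, s = y :: d /\ m <= y.
Proof.
elim: k m => [|k IH] m Hk; first by rewrite inE => /eqP ->; exists n, [::]; rewrite addn0 in Hk.
rewrite /= B_cons mem_cat => /orP[/mapP[c _ ->]|Hs]; first by exists m, c.
have Hk' : m.+1 + k <= n by rewrite addSnnS.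
have [y [d [E Hy]]] := IH m.+1 Hk' Hs.
by exists y, d; rewrite (ltnW Hy).
Qed.

Lemma pw_cons x L : pairwise lexlt L -> pairwise lexlt (map (cons x) L).
Proof.
elim: L => //= a L IH /andP[Ha HL]; rewrite IH // andbT.
apply/allP=> b /mapP[c Hc ->] /=; rewrite ltnn eqxx /=; exact: (allP Ha).
Qed.

Lemma B_pw k m : m + k <= n -> (forall x, m <= x < m + k -> pairwise lexlt (G x)) ->
  pairwise lexlt (B G n (iota m k)).
Proof.
elim: k m => [|k IH] m Hk HG; first by [].
rewrite /= B_cons pairwise_cat; apply/and3P; split.
- apply/allrelP=> a b /mapP[c _ ->] Hb.
  have Hk' : m.+1 + k <= n by rewrite addSnnS.
  have [y [d [-> Hy]]] := B_mem Hk' Hb.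
  by rewrite /= Hy.
- by apply: pw_cons; apply: HG; rewrite leqnn addnS ltnS leq_addr.
- apply: IH; first by rewrite addSnnS.
  move=> x /andP[h1 h2]; apply: HG; rewrite (ltnW h1) -addSnnS //.
Qed.
End Blocks.

Ltac tolia := try apply/leP; try apply/ltP; try apply/eqP; repeat match goal with
  | H : is_true (_ <= _) |- _ => move/leP: H
  | H : is_true (_ < _) |- _ => move/ltP: H
  | H : @eq nat _ _ |- _ => move: H
  end; rewrite -?plusE -?minusE -?multE; intros; lia.

Lemma A1 x n : x <= n./2 -> x <= n - x.
Proof. rewrite geq_half_double -muln2 => H; tolia. Qed.

Lemma A2 m n : 0 < n -> m <= n -> m + (n./2.+1 - m) <= n.
Proof.
move=> H1 H2; have : n./2 < n by rewrite ltn_half_double -muln2; tolia.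
move=> H3; tolia.
Qed.

Lemma A3 x y n : x + y <= n -> x <= y -> x <= n./2.
Proof. move=> H1 H2; rewrite geq_half_double -muln2; tolia. Qed.

Lemma A4 x n : x <= n./2 -> x <= n.
Proof. rewrite geq_half_double -muln2 => H; tolia. Qed.

Fixpoint gen f n m : seq (seq nat) :=
  match f with
  | 0 => [::]
  | f'.+1 => B (fun x => gen f' (n - x) x) n (iota m (n./2.+1 - m))
  end.

Lemma sumn_ge_head y c : y <= sumn (y :: c).
Proof. by rewrite /= leq_addr. Qed.

Lemma gen_mem f n m s : 1 <= m -> m <= n -> n <= f ->
  (s \in gen f n m) = is_asc_comp n m s.
Proof.
elim: f n m s => [|f IH] n m s Hm Hmn Hnf.
  by move: (leq_trans Hm (leq_trans Hmn Hnf)).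
rewrite /= /B mem_cat; apply/idP/idP.
- case/orP=> [/flatten_mapP[x Hx /mapP[c Hc ->]]|].
  + rewrite mem_iota in Hx; case/andP: Hx => Hx1 Hx2.
    have Hxh : x <= n./2 by tolia.
    have Hx1' : 1 <= x by apply: leq_trans Hx1.
    have Hxn : x <= n - x by apply: A1.
    rewrite IH // in Hc; last by tolia.
    case/and5P: Hc => Hc1 Hc2 Hc3 Hc4 Hc5.
    move: Hc1 Hc2 Hc3 Hc4 Hc5; case: c => // y c' _ Hc2 Hc3 /eqP Hc4 /= Hc5.
    have := A4 Hxh => Hxn'.
    apply/and5P; split=> //=.
    * by rewrite Hx1' /=; exact: Hc2.
    * by rewrite Hc5; exact: Hc3.
    * move: Hc4 => /= Hc4; tolia.
  + rewrite inE => /eqP ->; apply/and5P; split=> //=.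
    * by rewrite andbT; apply: leq_trans Hmn.
    * by rewrite addn0.
- case/and5P; case: s => // x c _ /= /andP[Hx Hc] Hs /eqP Hsum Hmx.
  case: c Hc Hs Hsum => [|y c'] Hc Hs Hsum.
    by rewrite inE orbC; move: Hsum; rewrite addn0 => ->; rewrite eqxx.
  case/andP: Hs => Hxy Hs.
  have Hxn : x + y <= n by rewrite -Hsum leq_add2l leq_addr.
  have Hxh : x <= n./2 by apply: A3 Hxn Hxy.
  apply/orP; left; apply/flatten_mapP; exists x.
    by rewrite mem_iota Hmx /=; tolia.
  apply: map_f; rewrite IH //; first last.
  + tolia.
  + by apply: A1.
  apply/and5P; split=> //.
  by apply/eqP; rewrite -Hsum addKn.
Qed.

Lemma gen_pw f n m : 1 <= m -> m <= n -> n <= f -> pairwise lexlt (gen f n m).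
Proof.
elim: f n m => [|f IH] n m Hm Hmn Hnf.
  by move: (leq_trans Hm (leq_trans Hmn Hnf)).
rewrite /=; apply: B_pw; first by apply: A2 => //; apply: leq_trans Hmn.
move=> x /andP[Hx1 Hx2].
have Hxh : x <= n./2 by tolia.
have Hxn := A1 Hxh.
apply: IH => //; [exact: leq_trans Hx1 | tolia].
Qed.

Lemma gen_ne f n m : 1 <= m -> m <= n -> n <= f -> gen f n m != [::].
Proof.
case: f => [|f] Hm Hmn Hnf; first by move: (leq_trans Hm (leq_trans Hmn Hnf)).
by rewrite /= /B -size_eq0 size_cat addn1.
Qed.

Lemma all_seqsP k N s : size s <= k -> all (fun a => 0 < a <= N) s -> s \in all_seqs k N.
Proof.
elim: k s => [|k IH] [|a s] //= Hk /andP[Ha Hs].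
rewrite inE /=; apply: allpairs_f; first by rewrite mem_iota add1n ltnS.
exact: IH.
Qed.

Lemma size_sumn s : all (fun a => 0 < a) s -> size s <= sumn s.
Proof. elim: s => //= a s IH /andP[Ha Hs]; rewrite -add1n leq_add //; exact: IH. Qed.

Lemma mem_sumn a s : a \in s -> a <= sumn s.
Proof.
elim: s => //= b s IH; rewrite inE => /orP[/eqP->|H]; first exact: leq_addr.
by apply: leq_trans (IH H) _; rewrite leq_addl.
Qed.

Lemma asc_all n m s : is_asc_comp n m s -> s \in all_seqs n n.
Proof.
case/and5P=> _ Hp _ /eqP Hs _; apply: all_seqsP.
  by rewrite -Hs size_sumn.
apply/allP=> a Ha; rewrite (allP Hp a Ha) /= -Hs; exact: mem_sumn.
Qed.

Lemma asc_eq f n m : 1 <= m -> m <= n -> n <= f -> asc_comps n m = gen f n m.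
Proof.
move=> Hm Hmn Hnf; rewrite /asc_comps.
apply: (sorted_eq lexle_trans lexle_anti).
- exact: sort_sorted lexle_total _.
- exact: lexlt_sorted (gen_pw Hm Hmn Hnf).
rewrite perm_sort; apply: uniq_perm.
- exact: undup_uniq.
- exact: lexlt_uniq (gen_pw Hm Hmn Hnf).
move=> s; rewrite mem_undup mem_filter gen_mem //.
by case H: (is_asc_comp n m s) => //=; rewrite (asc_all H).
Qed.

Lemma gen_S f n m : gen f.+1 n m = B (fun x => gen f (n - x) x) n (iota m (n./2.+1 - m)).
Proof. by []. Qed.

Lemma sl_T n m : suffix_length n m = T (asc_comps n m).
Proof. by []. Qed.

Unset Implicit Arguments.
Theorem mainTheorem3 (n m : nat) :
  1 <= m -> m <= n ->
  suffix_length n m =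
    1 + \sum_(m <= x < n./2.+1) (suffix_length (n - x) x + 1).
Proof.
move=> Hm Hmn.
have [n' En] : exists n', n = n'.+1.
  by case: n Hmn => [|n'] Hmn; [move: (leq_trans Hm Hmn) | exists n'].
have Hnf : n <= n'.+1 by rewrite En.
rewrite sl_T (asc_eq Hm Hmn Hnf) gen_S.
rewrite B_T; first last.
- move=> x /andP[Hx1 Hx2].
  have Hxh : x <= n./2 by tolia.
  have Hxn := A1 Hxh.
  apply: gen_ne; [exact: leq_trans Hx1 | done | tolia].
- by apply: A2; rewrite // En.
rewrite addnC; congr (_ + _); apply: eq_big_seq => x.
rewrite mem_iota => /andP[Hx1 Hx2].
have Hxh : x <= n./2 by tolia.
have Hxn := A1 Hxh.
rewrite sl_T (asc_eq (f := n') _ Hxn) //; [exact: leq_trans Hx1 | tolia].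
Qed.
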